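(* Let $R_1,\dots,R_6$ be six rods in $\mathbb{R}^3$ ($n_r^i=1$ for all $i$) in generic position. Suppose they intersect in the strutted configuration in which each of $R_3,R_4,R_5,R_6$ joins $R_1$ to $R_2$: there are points $\mathbf p_1\in R_1\cap R_3$, $\mathbf p_2\in R_2\cap R_3$, $\mathbf p_3\in R_1\cap R_4$, $\mathbf p_4\in R_2\cap R_4$, $\mathbf p_5\in R_1\cap R_5$, $\mathbf p_6\in R_2\cap R_5$, $\mathbf p_7\in R_1\cap R_6$, $\mathbf p_8\in R_2\cap R_6$. Then the composite body $R_1\cup\cdots\cup R_6$ is rigid.
   Context: A rod is a straight segment in $\mathbb{R}^3$ that moves as a rigid body; $n_r^i$ denotes the number of rods in component $R_i$. Positions are generic apart from the stated incidences. A union of rods is rigid if it is infinitesimally rigid in the following sense. An infinitesimal motion is admissible if it preserves, to first order, distances between points on each rod, and if points lying on a common rod keep fixed relative position along the rod to first order. For example, $\mathbf p_3$ and $\mathbf p_5$ stay fixed relative to $\mathbf p_1,\mathbf p_7$ on $R_1$, and $\mathbf p_4,\mathbf p_6$ stay fixed relative to $\mathbf p_2,\mathbf p_8$ on $R_2$. The union is rigid if every admissible infinitesimal motion is a Euclidean rigid motion of the whole union. Equivalently, the composite rigidity matrix has a right nullspace of dimension $6$. *)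

(* Defs.v *)
From HB Require Import structures.
From mathcomp Require Import all_boot all_order all_algebra.
From mathcomp Require Import reals.
From mathcomp Require Import mpoly.
Set Implicit Arguments. Unset Strict Implicit. Unset Printing Implicit Defensive.
Import Order.TTheory GRing.Theory Num.Theory.
Local Open Scope ring_scope.

Section RodDefs.
Variable R : realType.

Definition vec3 (a b c : R) : 'rV[R]_3 := \row_(i < 3) [:: a; b; c]`_i.

Definition cross3 (u w : 'rV[R]_3) : 'rV[R]_3 :=
  vec3 (u 0 1 * w 0 2 - u 0 2 * w 0 1)
       (u 0 2 * w 0 0 - u 0 0 * w 0 2)
       (u 0 0 * w 0 1 - u 0 1 * w 0 0).

(* velocity at the point y of the infinitesimal Euclidean (rigid) motion with
   angular velocity om and translational velocity v:  om x y + v *)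
Definition rvel (om v y : 'rV[R]_3) : 'rV[R]_3 := cross3 om y + v.

(* Points are indexed 0..7 (paper: p_1..p_8,
   i.e. index i stands for p_(i+1)); rods are indexed 0..5 (paper R_1..R_6).
   Point i lies on rod [rodA i] = R_1 (i even) or R_2 (i odd), and on the
   strut rod [rodB i] = R_(3 + i/2). *)
Definition rodA (i : 'I_8) : 'I_6 := inord (odd i).
Definition rodB (i : 'I_8) : 'I_6 := inord (2 + i./2).

(* Two incident points spanning the line of each rod:
   R_1 : p_1, p_7 ; R_2 : p_2, p_8 ; R_(3+j) : p_(2j+1), p_(2j+2). *)
Definition rod_pt1 (k : 'I_6) : 'I_8 :=
  if (k : nat) == 0%N then inord 0 else if (k : nat) == 1%N then inord 1
  else inord (2 * (k - 2)).
Definition rod_pt2 (k : 'I_6) : 'I_8 :=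
  if (k : nat) == 0%N then inord 6 else if (k : nat) == 1%N then inord 7
  else inord (2 * (k - 2) + 1).

Definition rod_line (p : 'I_8 -> 'rV[R]_3) (k : 'I_6) (t : R) : 'rV[R]_3 :=
  p (rod_pt1 k) + t *: (p (rod_pt2 k) - p (rod_pt1 k)).

(* An admissible infinitesimal motion: every rod k moves as a rigid body with
   (om k, v k), and at each intersection point the two rods through it give
   that point the same velocity. *)
Definition admissible (p : 'I_8 -> 'rV[R]_3) (om v : 'I_6 -> 'rV[R]_3) :=
  forall i : 'I_8,
    rvel (om (rodA i)) (v (rodA i)) (p i) = rvel (om (rodB i)) (v (rodB i)) (p i).

Definition union_rigid (p : 'I_8 -> 'rV[R]_3) :=
  forall om v : 'I_6 -> 'rV[R]_3, admissible p om v ->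
    exists om0 v0 : 'rV[R]_3, forall (k : 'I_6) (t : R),
      rvel (om k) (v k) (rod_line p k t) = rvel om0 v0 (rod_line p k t).

Definition strut_config (x : 'I_18 -> R) (i : 'I_8) : 'rV[R]_3 :=
  let X (n : nat) := x (inord n) in
  let a := vec3 (X 0%N) (X 1%N) (X 2%N) in
  let d := vec3 (X 3%N) (X 4%N) (X 5%N) in
  let b := vec3 (X 9%N) (X 10%N) (X 11%N) in
  let e := vec3 (X 12%N) (X 13%N) (X 14%N) in
  match (i : nat) with
  | 0%N => a
  | 1%N => b
  | 2%N => a + X 6%N *: d
  | 3%N => b + X 15%N *: e
  | 4%N => a + X 7%N *: d
  | 5%N => b + X 16%N *: e
  | 6%N => a + X 8%N *: d
  | _ => b + X 17%N *: e
  end.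

End RodDefs.

(* Main.v *)
Require Import Defs.
From HB Require Import structures.
From mathcomp Require Import all_boot all_order all_algebra.
From mathcomp Require Import reals.
From mathcomp Require Import mpoly.
From mathcomp Require Import ring.
Import Order.TTheory GRing.Theory Num.Theory.
Local Open Scope ring_scope.
Section S.
Variable R : realType.
Definition dot3 (u w : 'rV[R]_3) := u 0 0 * w 0 0 + u 0 1 * w 0 1 + u 0 2 * w 0 2.
Lemma rv3 (u w : 'rV[R]_3) : u 0 0 = w 0 0 -> u 0 1 = w 0 1 -> u 0 2 = w 0 2 -> u = w.
Proof. move=> h0 h1 h2; apply/rowP => i;
case: i => [[|[|[|//]]] Hi].
- by rewrite (_ : Ordinal Hi = 0) //; apply: val_inj.
- by rewrite (_ : Ordinal Hi = 1) //; apply: val_inj.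
- by rewrite (_ : Ordinal Hi = 2) //; apply: val_inj.
Qed.
Lemma rvel_line (om v p q : 'rV[R]_3) t : rvel om v (p + t *: (q - p)) = (1 - t) *: rvel om v p + t *: rvel om v q.
Proof. apply: rv3; rewrite /rvel /cross3 /vec3 !mxE /=; ring. Qed.
Lemma test (k : 'I_6) : k = rodA (rod_pt1 k) \/ k = rodB (rod_pt1 k).
Proof.
case: k => [[|[|[|[|[|[|//]]]]]] Hk]; [left|left|right|right|right|right];
  apply: val_inj; rewrite /rodA /rodB /rod_pt1 /= !inordK //.
Qed.
Lemma test2 (k : 'I_6) : k = rodA (rod_pt2 k) \/ k = rodB (rod_pt2 k).
Proof.
case: k => [[|[|[|[|[|[|//]]]]]] Hk]; [left|left|right|right|right|right];
  apply: val_inj; rewrite /rodA /rodB /rod_pt2 /= !inordK //.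
Qed.

Ltac vexp := rewrite /dot3 /rvel /cross3 /vec3 ?mxE /=.

Lemma dot0l (w : 'rV[R]_3) : dot3 0 w = 0.
Proof. vexp; ring. Qed.

Lemma stepA (om0 v0 om1 v1 oms vs q r : 'rV[R]_3) :
  rvel om0 v0 q = rvel oms vs q -> rvel om1 v1 r = rvel oms vs r ->
  dot3 (rvel (om1 - om0) (v1 - v0) r) (r - q) = 0.
Proof.
move=> h1 h2.
have -> : dot3 (rvel (om1 - om0) (v1 - v0) r) (r - q) =
  dot3 (rvel om1 v1 r - rvel oms vs r) (r - q) - dot3 (rvel om0 v0 q - rvel oms vs q) (r - q).
  by vexp; ring.
by rewrite h1 h2; vexp; ring.
Qed.

Definition Ddet (s1 s2 s3 t1 t2 t3 : R) :=
  s1*(t2*(s3*t3) - (s2*t2)*t3) - t1*(s2*(s3*t3) - (s2*t2)*s3) + (s1*t1)*(s2*t3 - t2*s3).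

Lemma cramer (s1 s2 s3 t1 t2 t3 X Y Z : R) : Ddet s1 s2 s3 t1 t2 t3 != 0 ->
  s1*X - t1*Y - s1*t1*Z = 0 -> s2*X - t2*Y - s2*t2*Z = 0 -> s3*X - t3*Y - s3*t3*Z = 0 ->
  X = 0 /\ Y = 0 /\ Z = 0.
Proof.
move=> hD e1 e2 e3.
have hX : Ddet s1 s2 s3 t1 t2 t3 * X =
   (t2*(s3*t3) - (s2*t2)*t3) * (s1*X - t1*Y - s1*t1*Z)
 - (t1*(s3*t3) - (s1*t1)*t3) * (s2*X - t2*Y - s2*t2*Z)
 + (t1*(s2*t2) - (s1*t1)*t2) * (s3*X - t3*Y - s3*t3*Z) by rewrite /Ddet; ring.
have hY : Ddet s1 s2 s3 t1 t2 t3 * (- Y) =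
   - (s2*(s3*t3) - (s2*t2)*s3) * (s1*X - t1*Y - s1*t1*Z)
 + (s1*(s3*t3) - (s1*t1)*s3) * (s2*X - t2*Y - s2*t2*Z)
 - (s1*(s2*t2) - (s1*t1)*s2) * (s3*X - t3*Y - s3*t3*Z) by rewrite /Ddet; ring.
have hZ : Ddet s1 s2 s3 t1 t2 t3 * (- Z) =
   (s2*t3 - t2*s3) * (s1*X - t1*Y - s1*t1*Z)
 - (s1*t3 - t1*s3) * (s2*X - t2*Y - s2*t2*Z)
 + (s1*t2 - t1*s2) * (s3*X - t3*Y - s3*t3*Z) by rewrite /Ddet; ring.
rewrite e1 e2 e3 !mulr0 ?subr0 ?addr0 ?oppr0 in hX hY hZ.
move/eqP: hX; rewrite mulf_eq0 (negbTE hD) /= => /eqP ->.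
move/eqP: hY; rewrite mulf_eq0 (negbTE hD) /= oppr_eq0 => /eqP ->.
move/eqP: hZ; rewrite mulf_eq0 (negbTE hD) /= oppr_eq0 => /eqP ->.
by [].
Qed.

Lemma core (a d b e W U : 'rV[R]_3) (s1 s2 s3 t1 t2 t3 : R) :
  Ddet s1 s2 s3 t1 t2 t3 != 0 -> dot3 d (cross3 (b - a) e) != 0 ->
  dot3 (rvel W U b) (b - a) = 0 ->
  dot3 (rvel W U (b + s1 *: e)) (b + s1 *: e - (a + t1 *: d)) = 0 ->
  dot3 (rvel W U (b + s2 *: e)) (b + s2 *: e - (a + t2 *: d)) = 0 ->
  dot3 (rvel W U (b + s3 *: e)) (b + s3 *: e - (a + t3 *: d)) = 0 ->
  forall s, rvel W U (b + s *: e) =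
    (dot3 (rvel W U b) e / dot3 d (cross3 (b - a) e)) *: cross3 d (b + s *: e - a).
Proof.
move=> hD hT h0 h1 h2 h3 s.
pose al := dot3 (rvel W U b) (b - a).
pose be := dot3 (rvel W U b) e.
pose ga := dot3 (rvel W U b) d.
pose de := dot3 (cross3 W e) (b - a).
pose ep := dot3 (cross3 W e) d.
have hF : forall s t, dot3 (rvel W U (b + s *: e)) (b + s *: e - (a + t *: d)) =
   al + s * (be + de) - t * ga - s * t * ep.
  by move=> s' t'; rewrite /al /be /ga /de /ep; vexp; ring.
have hal : al = 0 by [].
rewrite hF hal add0r in h1; rewrite hF hal add0r in h2; rewrite hF hal add0r in h3.
have [hX [hY hZ]] := cramer _ _ _ _ _ _ _ _ _ hD h1 h2 h3.
set T := dot3 d (cross3 (b - a) e).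
have key : T *: rvel W U (b + s *: e) - be *: cross3 d (b + s *: e - a) =
  ga *: cross3 (b - a) e + al *: cross3 e d + (s * ep) *: cross3 (b - a) e
  + (s * (be + de)) *: cross3 e d.
  apply: rv3; rewrite /T /al /be /ga /de /ep; vexp; ring.
rewrite hX hY hZ hal !mulr0 !scale0r !addr0 in key.
move/eqP: key; rewrite subr_eq0 => /eqP key.
by rewrite -[rvel W U _](scalerK hT) key scalerA mulrC.
Qed.

Lemma shiftE (om0 v0 d a y : 'rV[R]_3) l :
  rvel (om0 + l *: d) (v0 - l *: cross3 d a) y = rvel om0 v0 y + l *: cross3 d (y - a).
Proof. apply: rv3; vexp; ring. Qed.
Lemma relE (om0 v0 om1 v1 y : 'rV[R]_3) :
  rvel om1 v1 y = rvel om0 v0 y + rvel (om1 - om0) (v1 - v0) y.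
Proof. apply: rv3; vexp; ring. Qed.
Lemma crossz (a d : 'rV[R]_3) t : cross3 d (a + t *: d - a) = 0.
Proof. apply: rv3; vexp; ring. Qed.
Lemma crossz0 (a d : 'rV[R]_3) : cross3 d (a - a) = 0.
Proof. apply: rv3; vexp; ring. Qed.
End S.
Arguments dot3 {R}.
Arguments Ddet {R}.
Ltac vexp := rewrite /dot3 /rvel /cross3 /vec3 ?mxE /=.

Definition PT {A : comNzRingType} (X : nat -> A) : A :=
  (X 15%N*(X 7%N*(X 17%N*X 8%N) - (X 16%N*X 7%N)*X 8%N) - X 6%N*(X 16%N*(X 17%N*X 8%N) - (X 16%N*X 7%N)*X 17%N)
    + (X 15%N*X 6%N)*(X 16%N*X 8%N - X 7%N*X 17%N)) *
  (X 3%N * ((X 10%N - X 1%N) * X 14%N - (X 11%N - X 2%N) * X 13%N)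
 + X 4%N * ((X 11%N - X 2%N) * X 12%N - (X 9%N - X 0%N) * X 14%N)
 + X 5%N * ((X 9%N - X 0%N) * X 13%N - (X 10%N - X 1%N) * X 12%N)).

Lemma mevalPT (R : realType) (x : 'I_18 -> R) :
  (PT (fun n => 'X_(inord n) : {mpoly R[18]})).@[x] = PT (fun n => x (inord n)).
Proof. by rewrite /PT !(mevalM, mevalB, mevalD, mevalXU). Qed.

Lemma PT_eq (R : realType) (x : 'I_18 -> R) : let X n := x (inord n) in
  PT X = Ddet (X 15%N) (X 16%N) (X 17%N) (X 6%N) (X 7%N) (X 8%N) *
    dot3 (vec3 (X 3%N) (X 4%N) (X 5%N))
     (cross3 (vec3 (X 9%N) (X 10%N) (X 11%N) - vec3 (X 0%N) (X 1%N) (X 2%N)) (vec3 (X 12%N) (X 13%N) (X 14%N))).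
Proof. move=> X; rewrite /PT /Ddet; vexp; ring. Qed.

Definition xs (R : realType) (i : 'I_18) : R :=
  nth 0 [:: 0;0;0; 1;0;0; 1;3%:R;2%:R; 0;1;0; 0;0;1; 1;2%:R;3%:R] i.

Lemma PT_xs (R : realType) : PT (fun n => xs R (inord n)) = 7%:R.
Proof. rewrite /PT /xs !inordK //=; ring. Qed.

Theorem mainTheorem5 (R : realType) :
  exists P : {mpoly R[18]}, P != 0 /\
    forall x : 'I_18 -> R, P.@[x] != 0 -> union_rigid (strut_config x).
Proof.
exists (PT (fun n => 'X_(inord n))); split.
  apply/negP => /eqP h0.
  have := congr1 (meval (xs R)) h0.
  by rewrite mevalPT meval0 PT_xs => /eqP; rewrite pnatr_eq0.
move=> x Px om v H.
rewrite mevalPT PT_eq mulf_eq0 negb_or in Px.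
case/andP: Px => hD hT.
pose X n := x (inord n).
pose a := vec3 (X 0%N) (X 1%N) (X 2%N).
pose d := vec3 (X 3%N) (X 4%N) (X 5%N).
pose b := vec3 (X 9%N) (X 10%N) (X 11%N).
pose e := vec3 (X 12%N) (X 13%N) (X 14%N).
pose om0 := om (inord 0). pose v0 := v (inord 0).
pose om1 := om (inord 1). pose v1 := v (inord 1).
have H0 : rvel om0 v0 a = rvel (om (inord 2)) (v (inord 2)) a := H (Ordinal (isT : (0 < 8)%N)).
have H1 : rvel om1 v1 b = rvel (om (inord 2)) (v (inord 2)) b := H (Ordinal (isT : (1 < 8)%N)).
have H2 : rvel om0 v0 (a + X 6%N *: d) = rvel (om (inord 3)) (v (inord 3)) (a + X 6%N *: d)
  := H (Ordinal (isT : (2 < 8)%N)).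
have H3 : rvel om1 v1 (b + X 15%N *: e) = rvel (om (inord 3)) (v (inord 3)) (b + X 15%N *: e)
  := H (Ordinal (isT : (3 < 8)%N)).
have H4 : rvel om0 v0 (a + X 7%N *: d) = rvel (om (inord 4)) (v (inord 4)) (a + X 7%N *: d)
  := H (Ordinal (isT : (4 < 8)%N)).
have H5 : rvel om1 v1 (b + X 16%N *: e) = rvel (om (inord 4)) (v (inord 4)) (b + X 16%N *: e)
  := H (Ordinal (isT : (5 < 8)%N)).
have H6 : rvel om0 v0 (a + X 8%N *: d) = rvel (om (inord 5)) (v (inord 5)) (a + X 8%N *: d)
  := H (Ordinal (isT : (6 < 8)%N)).
have H7 : rvel om1 v1 (b + X 17%N *: e) = rvel (om (inord 5)) (v (inord 5)) (b + X 17%N *: e)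
  := H (Ordinal (isT : (7 < 8)%N)).
have F0 := stepA _ _ _ _ _ _ _ _ _ H0 H1.
have F1 := stepA _ _ _ _ _ _ _ _ _ H2 H3.
have F2 := stepA _ _ _ _ _ _ _ _ _ H4 H5.
have F3 := stepA _ _ _ _ _ _ _ _ _ H6 H7.
have C := core _ _ _ _ _ _ _ _ _ _ _ _ _ hD hT F0 F1 F2 F3.
have C0 := C 0; rewrite scale0r addr0 in C0.
set lam := (_ / _) in C C0.
exists (om0 + lam *: d), (v0 - lam *: cross3 d a).
have Q : forall i : 'I_8, rvel (om (rodA i)) (v (rodA i)) (strut_config x i) =
   rvel (om0 + lam *: d) (v0 - lam *: cross3 d a) (strut_config x i).
  have Qe : forall t, rvel om0 v0 (a + t *: d) =
     rvel (om0 + lam *: d) (v0 - lam *: cross3 d a) (a + t *: d).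
    by move=> t; rewrite shiftE crossz scaler0 addr0.
  have Qa : rvel om0 v0 a = rvel (om0 + lam *: d) (v0 - lam *: cross3 d a) a.
    by rewrite shiftE crossz0 scaler0 addr0.
  have Qo : forall t, rvel om1 v1 (b + t *: e) =
     rvel (om0 + lam *: d) (v0 - lam *: cross3 d a) (b + t *: e).
    by move=> t; rewrite shiftE (relE _ om0 v0) C.
  have Qb : rvel om1 v1 b = rvel (om0 + lam *: d) (v0 - lam *: cross3 d a) b.
    by rewrite shiftE (relE _ om0 v0) C0.
  case=> [[|[|[|[|[|[|[|[|//]]]]]]]] Hi].
  - exact: Qa.
  - exact: Qb.
  - exact: Qe.
  - exact: Qo.
  - exact: Qe.
  - exact: Qo.
  - exact: Qe.
  - exact: Qo.
have E : forall (i : 'I_8) (k : 'I_6), k = rodA i \/ k = rodB i ->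
   rvel (om k) (v k) (strut_config x i) =
   rvel (om0 + lam *: d) (v0 - lam *: cross3 d a) (strut_config x i).
  by move=> i k [->|->]; [exact: Q | rewrite -H; exact: Q].
move=> k t; rewrite /rod_line !rvel_line.
by rewrite (E _ _ (test k)) (E _ _ (test2 k)).
Qed.
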